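(* In $SO(6)$, writing diagonal matrices as vectors of their diagonal entries, let $\Gamma_1=\{(1,1,1,1,1,1),(-1,-1,-1,-1,-1,-1),(-1,-1,1,1,1,1),(-1,1,-1,1,1,1),(1,-1,-1,1,1,1),(-1,1,1,-1,-1,-1),(1,-1,1,-1,-1,-1),(1,1,-1,-1,-1,-1)\}$ and $\Gamma_2=\{(1,1,1,1,1,1),(-1,-1,-1,-1,-1,-1),(-1,-1,1,1,1,1),(1,1,-1,-1,1,1),(1,1,1,1,-1,-1),(-1,-1,-1,-1,1,1),(-1,-1,1,1,-1,-1),(1,1,-1,-1,-1,-1)\}$. Then $\Gamma_1$ and $\Gamma_2$ are subgroups of $SO(6)$ which are almost conjugate in $SO(6)$ but not conjugate in $SO(6)$.
   Context: Two finite subgroups $\Gamma_1,\Gamma_2$ of a group $G$ are almost conjugate in $G$ if $\#([b]_G\cap\Gamma_1)=\#([b]_G\cap\Gamma_2)$ for every conjugacy class $[b]_G$ of $G$. *)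

(* Defs.v *)
(* The real group SO(6) is stated over an arbitrary real
   closed field R (for R = the reals this is the paper's statement; by
   Tarski transfer the first-order statement is equivalent for all rcf). *)
From HB Require Import structures.
From mathcomp Require Import all_boot all_order all_algebra.
From Stdlib Require Import ClassicalEpsilon.
Set Implicit Arguments.
Unset Strict Implicit.
Unset Printing Implicit Defensive.
Import GRing.Theory Num.Theory.
Local Open Scope ring_scope.

Definition inSO (R : rcfType) (n : nat) (A : 'M[R]_n) : bool :=
  (A *m A^T == 1%:M) && (\det A == 1).

Definition is_subgroup_SO (R : rcfType) (n : nat) (S : seq 'M[R]_n) : Prop :=
  [/\ forall A, A \in S -> inSO A,
      1%:M \in S,
      forall A B, A \in S -> B \in S -> A *m B \in S
    & forall A, A \in S -> invmx A \in S].

Definition conj_in_SO (R : rcfType) (n : nat) (a b : 'M[R]_n) : Prop :=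
  exists2 g : 'M[R]_n, inSO g & a = g *m b *m invmx g.

Definition bool_of_prop (P : Prop) : bool :=
  if excluded_middle_informative P then true else false.

(* #([b] ∩ S), S viewed as a set *)
Definition class_count (R : rcfType) (n : nat) (b : 'M[R]_n) (S : seq 'M[R]_n) : nat :=
  count (fun a => bool_of_prop (conj_in_SO a b)) (undup S).

Definition almost_conjugate_SO (R : rcfType) (n : nat) (S1 S2 : seq 'M[R]_n) : Prop :=
  forall b : 'M[R]_n, inSO b -> class_count b S1 = class_count b S2.

Definition conjugate_SO (R : rcfType) (n : nat) (S1 S2 : seq 'M[R]_n) : Prop :=
  exists2 g : 'M[R]_n, inSO g & S2 =i [seq g *m x *m invmx g | x <- S1].

Definition diag6 (R : rcfType) (s : seq int) : 'M[R]_6 :=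
  diag_mx (\row_(i < 6) (nth 0 s i)%:~R).

Definition Gamma1 (R : rcfType) : seq 'M[R]_6 := map (diag6 R)
  [:: [:: 1; 1; 1; 1; 1; 1];
      [:: -1; -1; -1; -1; -1; -1];
      [:: -1; -1; 1; 1; 1; 1];
      [:: -1; 1; -1; 1; 1; 1];
      [:: 1; -1; -1; 1; 1; 1];
      [:: -1; 1; 1; -1; -1; -1];
      [:: 1; -1; 1; -1; -1; -1];
      [:: 1; 1; -1; -1; -1; -1]]%R.

Definition Gamma2 (R : rcfType) : seq 'M[R]_6 := map (diag6 R)
  [:: [:: 1; 1; 1; 1; 1; 1];
      [:: -1; -1; -1; -1; -1; -1];
      [:: -1; -1; 1; 1; 1; 1];
      [:: 1; 1; -1; -1; 1; 1];
      [:: 1; 1; 1; 1; -1; -1];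
      [:: -1; -1; -1; -1; 1; 1];
      [:: -1; -1; 1; 1; -1; -1];
      [:: 1; 1; -1; -1; -1; -1]]%R.

(* Main.v *)
Require Import Defs.
From HB Require Import structures.
From mathcomp Require Import all_boot all_order all_algebra all_fingroup.
From Stdlib Require Import ClassicalEpsilon.
Set Implicit Arguments.
Unset Strict Implicit.
Unset Printing Implicit Defensive.
Import GRing.Theory Num.Theory.
Local Open Scope ring_scope.

Definition mulseq (s t : seq int) : seq int :=
  [seq nth 0 s i * nth 0 t i | i <- iota 0 6].
Definition ones : seq int := [:: 1; 1; 1; 1; 1; 1].
Definition prod6 (s : seq int) : int :=
  nth 0 s 0 * (nth 0 s 1 * (nth 0 s 2 * (nth 0 s 3 * (nth 0 s 4 * (nth 0 s 5 * 1))))).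
Definition sum6 (s : seq int) : int :=
  nth 0 s 0 + (nth 0 s 1 + (nth 0 s 2 + (nth 0 s 3 + (nth 0 s 4 + (nth 0 s 5 + 0))))).

Section S.
Variable R : rcfType.

Lemma diag6M s t : diag6 R s *m diag6 R t = diag6 R (mulseq s t).
Proof.
rewrite /diag6 mulmx_diag; congr diag_mx; apply/rowP=> i; rewrite !mxE.
by rewrite /mulseq (nth_map 0%N) ?size_iota // nth_iota // add0n intrM.
Qed.

Lemma diag6_inj s t : diag6 R s = diag6 R t -> mkseq (nth 0 s) 6 = mkseq (nth 0 t) 6.
Proof.
move=> E; apply/eq_in_map => i; rewrite mem_iota => /andP[_ Hi].
have := congr1 (fun M : 'M[R]_6 => M (Ordinal Hi) (Ordinal Hi)) E.
rewrite /diag6 !mxE eqxx /= !mulr1n; exact: intr_inj.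
Qed.

Lemma diag6_ones : diag6 R ones = 1%:M.
Proof.
rewrite /diag6 -diag_const_mx; congr diag_mx; apply/rowP => i; rewrite !mxE.
by case: i => [[|[|[|[|[|[|?]]]]]]].
Qed.

Lemma prod6E s : \prod_(i < 6) ((nth 0 s i)%:~R : R) = (prod6 s)%:~R.
Proof. by rewrite !big_ord_recl big_ord0 /prod6 !intrM. Qed.

Lemma sum6E s : \tr (diag6 R s) = (sum6 s)%:~R.
Proof.
rewrite /diag6 mxtrace_diag !big_ord_recl big_ord0 /sum6 !intrD !mxE //.
Qed.

Lemma diag6_SO s : mulseq s s = ones -> prod6 s = 1 -> inSO (diag6 R s).
Proof.
move=> H1 H2; rewrite /inSO.
have -> : (diag6 R s)^T = diag6 R s by rewrite /diag6 tr_diag_mx.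
rewrite diag6M H1 diag6_ones eqxx /= /diag6 det_diag.
under eq_bigr do rewrite mxE.
by rewrite prod6E H2.
Qed.

Lemma invSO (g : 'M[R]_6) : inSO g -> @eq 'M[R]_6 (invmx g) g^T.
Proof.
case/andP=> /eqP H _; have [U _] := mulmx1_unit H.
by rewrite -[invmx g]mulmx1 -H mulmxA mulVmx // mul1mx.
Qed.

Lemma inSO_mul (g h : 'M[R]_6) : inSO g -> inSO h -> inSO (g *m h).
Proof.
case/andP=> /eqP Hg /eqP Dg /andP[/eqP Hh /eqP Dh].
rewrite /inSO trmx_mul mulmxA -(mulmxA g h) Hh mulmx1 Hg eqxx /=.
by rewrite det_mulmx Dg Dh mulr1.
Qed.

Lemma inSO_tr (g : 'M[R]_6) : inSO g -> inSO g^T.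
Proof.
case/andP=> /eqP Hg /eqP Dg; rewrite /inSO trmxK (mulmx1C Hg) eqxx /=.
by rewrite det_tr Dg.
Qed.

Lemma conj_equiv (g x y b : 'M[R]_6) : inSO g -> y = g *m x *m g^T ->
  (conj_in_SO x b <-> conj_in_SO y b).
Proof.
move=> Sg Ey; have Ig := invSO Sg.
split=> [[h Sh Ex]|[h Sh Ey']].
  exists (g *m h); first exact: inSO_mul.
  rewrite Ey Ex (invSO Sh) invSO ?inSO_mul // trmx_mul !mulmxA //.
exists (g^T *m h); first by apply: inSO_mul => //; apply: inSO_tr.
rewrite invSO ?inSO_mul ?inSO_tr // trmx_mul trmxK.
have Ey2 : y = h *m b *m h^T by rewrite Ey' invSO.
case/andP: Sg => /eqP Hg _.
have -> : x = g^T *m y *m g.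
  by rewrite Ey !mulmxA (mulmx1C Hg) mul1mx -mulmxA (mulmx1C Hg) mulmx1.
by rewrite Ey2 !mulmxA.
Qed.


Lemma bop_eq (P Q : Prop) : (P <-> Q) -> bool_of_prop P = bool_of_prop Q.
Proof.
rewrite /bool_of_prop => PQ.
by case: excluded_middle_informative => p; case: excluded_middle_informative => q //; exfalso; tauto.
Qed.

Lemma perm_conj (s : {perm 'I_6}) u v : ~~ odd_perm s ->
  (forall i : 'I_6, nth 0 v i = nth 0 u (s i)) ->
  exists2 g : 'M[R]_6, inSO g & diag6 R v = g *m diag6 R u *m g^T.
Proof.
move=> Od H; exists (perm_mx s).
  rewrite /inSO tr_perm_mx -perm_mxM mulgV perm_mx1 eqxx /=.
  by rewrite det_perm (negbTE Od) expr0.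
rewrite tr_perm_mx -col_permE -row_permE; apply/matrixP=> i j.
by rewrite /diag6 !mxE (inj_eq perm_inj) H.
Qed.

Lemma subgroupL (L : seq (seq int)) :
  all (fun s => (mulseq s s == ones) && (prod6 s == 1)) L -> ones \in L ->
  all (fun s => all (fun t => mulseq s t \in L) L) L ->
  is_subgroup_SO (map (diag6 R) L).
Proof.
move=> /allP H1 H2 /allP H3.
have SO s : s \in L -> inSO (diag6 R s).
  by move=> sL; have /andP[/eqP a /eqP b] := H1 s sL; apply: diag6_SO.
split.
- by move=> A /mapP[s sL ->]; apply: SO.
- by rewrite -diag6_ones; apply: map_f.
- move=> A B /mapP[s sL ->] /mapP[t tL ->]; rewrite diag6M; apply: map_f.
  exact: (allP (H3 s sL)).
- move=> A /mapP[s sL ->]; rewrite invSO ?SO //.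
  by rewrite /diag6 tr_diag_mx; apply: map_f.
Qed.

Lemma uniqL (L : seq (seq int)) : uniq L ->
  all (fun s => mkseq (nth 0 s) 6 == s) L -> uniq (map (diag6 R) L).
Proof.
move=> U /allP H; rewrite map_inj_in_uniq // => s t sL tL /diag6_inj.
by rewrite (eqP (H s sL)) (eqP (H t tL)).
Qed.

Lemma cc (s : {perm 'I_6}) u v b : ~~ odd_perm s ->
  (forall i : 'I_6, nth 0 v i = nth 0 u (s i)) ->
  bool_of_prop (conj_in_SO (diag6 R u) b) = bool_of_prop (conj_in_SO (diag6 R v) b).
Proof.
move=> Od H; have [g Sg E] := perm_conj Od H.
by apply: bop_eq; apply: conj_equiv E.
Qed.

End S.

Lemma tpermE' (T : finType) (x y z : T) :
  tperm x y z = if z == x then y else if z == y then x else z.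
Proof.
case: tpermP => [->|->|n1 n2]; first by rewrite eqxx.
  by case: eqP => [->|]; rewrite ?eqxx.
have/negPf-> : z != x by apply/eqP.
by have/negPf-> : z != y by apply/eqP.
Qed.

Notation o k := (@Ordinal 6 k isT).

Theorem mainTheorem3 (R : rcfType) :
  [/\ is_subgroup_SO (Gamma1 R), is_subgroup_SO (Gamma2 R),
      almost_conjugate_SO (Gamma1 R) (Gamma2 R)
    & ~ conjugate_SO (Gamma1 R) (Gamma2 R)].
Proof.
have U1 : uniq (Gamma1 R) by apply: uniqL; vm_compute.
have U2 : uniq (Gamma2 R) by apply: uniqL; vm_compute.
split.
- by apply: subgroupL; vm_compute.
- by apply: subgroupL; vm_compute.
- move=> b _; rewrite /class_count !undup_id //.
  rewrite /Gamma1 /Gamma2 /=.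
  have oddP a1 b1 c d : (a1 != b1) -> (c != d) -> ~~ odd_perm (tperm a1 b1 * tperm c d : {perm 'I_6}).
    by move=> ab cd; rewrite odd_permM !odd_tperm ab cd.
  rewrite (@cc R (tperm (o 0) (o 3) * tperm (o 4) (o 5)) [:: -1; 1; -1; 1; 1; 1] [:: 1; 1; -1; -1; 1; 1] b) ?oddP //;
    last by move=> i; rewrite permM !tpermE'; case: i => [[|[|[|[|[|[|?]]]]]]].
  rewrite (@cc R (tperm (o 1) (o 4) * tperm (o 2) (o 5)) [:: 1; -1; -1; 1; 1; 1] [:: 1; 1; 1; 1; -1; -1] b) ?oddP //;
    last by move=> i; rewrite permM !tpermE'; case: i => [[|[|[|[|[|[|?]]]]]]].
  rewrite (@cc R (tperm (o 1) (o 4) * tperm (o 2) (o 5)) [:: -1; 1; 1; -1; -1; -1] [:: -1; -1; -1; -1; 1; 1] b) ?oddP //;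
    last by move=> i; rewrite permM !tpermE'; case: i => [[|[|[|[|[|[|?]]]]]]].
  rewrite (@cc R (tperm (o 0) (o 3) * tperm (o 4) (o 5)) [:: 1; -1; 1; -1; -1; -1] [:: -1; -1; 1; 1; -1; -1] b) ?oddP //;
    last by move=> i; rewrite permM !tpermE'; case: i => [[|[|[|[|[|[|?]]]]]]].
case=> g Sg E.
set al : seq int := [:: -1; -1; 1; 1; 1; 1].
set bl : seq int := [:: -1; 1; -1; 1; 1; 1].
pose L2 : seq (seq int) := [:: [:: 1; 1; 1; 1; 1; 1];
      [:: -1; -1; -1; -1; -1; -1];
      [:: -1; -1; 1; 1; 1; 1];
      [:: 1; 1; -1; -1; 1; 1];
      [:: 1; 1; 1; 1; -1; -1];
      [:: -1; -1; -1; -1; 1; 1];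
      [:: -1; -1; 1; 1; -1; -1];
      [:: 1; 1; -1; -1; -1; -1]]%R.
have key : all (fun s => all (fun t => (s != t) ==> (sum6 s == sum6 al) ==>
   (sum6 t == sum6 bl) ==> (sum6 (mulseq s t) != sum6 (mulseq al bl))) L2) L2.
  by vm_compute.
have Ug : g \in unitmx by case/andP: Sg => /eqP H _; case: (mulmx1_unit H).
pose cj (M : 'M[R]_6) := g *m M *m invmx g.
have Hinj M : invmx g *m cj M *m g = M.
  by rewrite /cj !mulmxA mulVmx // mul1mx mulmxKV.
have Htr M : \tr (cj M) = \tr M.
  by rewrite /cj mxtrace_mulC mulmxA mulVmx // mul1mx.
have Hmul M N : cj M *m cj N = cj (M *m N).
  by rewrite /cj !mulmxA (mulmxKV Ug).
have Ga : cj (diag6 R al) \in Gamma2 R.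
  by rewrite E; apply: map_f; rewrite /Gamma1; apply: map_f; vm_compute.
have Gb : cj (diag6 R bl) \in Gamma2 R.
  by rewrite E; apply: map_f; rewrite /Gamma1; apply: map_f; vm_compute.
case/mapP: Ga => s sL Es; case/mapP: Gb => t tL Et.
have st : s != t.
  apply/eqP => est.
  have : diag6 R al = diag6 R bl by rewrite -(Hinj (diag6 R al)) -(Hinj (diag6 R bl)) Es Et est.
  by move/diag6_inj/eqP; vm_compute.
have tra : sum6 s = sum6 al.
  by apply: (@intr_inj R); rewrite -!sum6E -Es Htr.
have trb : sum6 t = sum6 bl.
  by apply: (@intr_inj R); rewrite -!sum6E -Et Htr.
have trab : sum6 (mulseq s t) = sum6 (mulseq al bl).
  by apply: (@intr_inj R); rewrite -!sum6E -!diag6M -Es -Et Hmul Htr.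
have := allP (allP key s sL) t tL.
by rewrite st tra trb trab !eqxx.
Qed.
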